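(* Let $N>1$, $d\ge1$, $m\ge1$, and let $f:\mathbb{R}^{N\times d}\times\mathbb{R}^{N\times 3}\to\mathbb{R}^m$ be $\mathrm{O}(3)$-invariant ($f(s,\vec r o^T)=f(s,\vec r)$ for all $o\in\mathrm{O}(3)$), translation-invariant ($f(s,\vec r+\mathbf 1t)=f(s,\vec r)$ for all $t\in\mathbb{R}^{1\times 3}$) and permutation-invariant ($f(\pi(s),\pi(\vec r))=f(s,\vec r)$ for all $\pi\in S_N$). Let $g$ be as in the context and, for a molecule $(s,\vec r)$, let $z_1(s,\vec r)=\rho\big(\sum_{j=1}^N\varphi(\mathrm{Concatenate}(\vec r_{1j}\vec E_1^T,\tilde s_j))\big)$ with $\vec E_1=g(\mathrm{LE}_1)$. Then there exist functions $\varphi,\rho$ and $h$ (with $h$ taking values in $\mathbb{R}^m$) such that the map $(s,\vec r)\mapsto\frac{1}{N!}\sum_{\pi\in S_N}h\big(z_1(\pi(s),\pi(\vec r))\big)$ is permutation-invariant and equals $f(s,\vec r)$ for all $(s,\vec r)$.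
   Context: For a molecule with features $s\in\mathbb{R}^{N\times d}$ (row $s_j$) and coordinates $\vec r\in\mathbb{R}^{N\times 3}$ (row $\vec r_j$), set $\vec r_{ij}=\vec r_i-\vec r_j$, node identity features $\tilde s_j=\mathrm{Concatenate}(s_j,j)\in\mathbb{R}^{d+1}$ and $\mathrm{LE}_i=\{(\tilde s_j,\vec r_{ij}): j=1,\dots,N\}$. $\mathbf 1\in\mathbb{R}^{N\times1}$ is the all-ones column. $S_N$ is the group of permutations of $\{1,\dots,N\}$; for a matrix $M$ with $N$ rows and $\pi\in S_N$, $\pi(M)$ is the matrix whose $i$-th row is the $\pi^{-1}(i)$-th row of $M$. $\mathrm{O}(3)=\{Q\in\mathbb{R}^{3\times3}:QQ^T=I\}$. The function $g$ maps such local environments to $\mathbb{R}^{3\times3}$, satisfies $g(\{(\tilde s_j,\vec r_{ij}o^T)\}_j)=g(\{(\tilde s_j,\vec r_{ij})\}_j)o^T$ for all $o\in\mathrm{O}(3)$, and for every molecule and $i$ the matrix $\vec E_i=g(\mathrm{LE}_i)$, with $k=\mathrm{rank}(\vec E_i)$, has its first $k$ rows forming an orthonormal basis of $\mathrm{span}\{\vec r_{ij}:j\}$ and its remaining rows zero. *)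

(* Defs.v *)
From HB Require Import structures.
From mathcomp Require Import all_boot all_order all_algebra all_fingroup.
From mathcomp Require Import reals.
Set Implicit Arguments. Unset Strict Implicit. Unset Printing Implicit Defensive.
Import Order.TTheory GRing.Theory Num.Theory.
Local Open Scope ring_scope.

Section Defs.
Variables (R : realType) (N d : nat).

Definition orth3 (o : 'M[R]_3) : Prop := o *m o^T = 1%:M.

Definition perm_rows (n : nat) (p : 'S_N) (M : 'M[R]_(N, n)) : 'M[R]_(N, n) :=
  \matrix_(i, c) M (p^-1 i)%g c.

Definition transl (t : 'rV[R]_3) : 'M[R]_(N, 3) := const_mx 1 *m t.

Definition stilde (s : 'M[R]_(N, d)) : 'M[R]_(N, d + 1) :=
  row_mx s (\col_(j < N) (j.+1)%:R).

Definition relmx (r : 'M[R]_(N, 3)) (i : 'I_N) : 'M[R]_(N, 3) :=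
  \matrix_(j, c) (r i c - r j c).

(* local environment LE_i, encoded as the pair of matrices whose j-th rows
   are s~_j and r_ij (the index j is part of s~_j, so the set
   {(s~_j, r_ij)} and this pair determine each other). *)
Definition LE (s : 'M[R]_(N, d)) (r : 'M[R]_(N, 3)) (i : 'I_N) :=
  (stilde s, relmx r i).

Definition gapp (g : 'M[R]_(N, d + 1) -> 'M[R]_(N, 3) -> 'M[R]_3)
  (e : 'M[R]_(N, d + 1) * 'M[R]_(N, 3)) : 'M[R]_3 := g e.1 e.2.

Definition g_equivariant (g : 'M[R]_(N, d + 1) -> 'M[R]_(N, 3) -> 'M[R]_3) :=
  forall (s : 'M[R]_(N, d)) (r : 'M[R]_(N, 3)) (i : 'I_N) (o : 'M[R]_3),
    orth3 o -> g (stilde s) (relmx r i *m o^T) = gapp g (LE s r i) *m o^T.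

Definition g_frame (g : 'M[R]_(N, d + 1) -> 'M[R]_(N, 3) -> 'M[R]_3) :=
  forall (s : 'M[R]_(N, d)) (r : 'M[R]_(N, 3)) (i : 'I_N),
    let E := gapp g (LE s r i) in
    let k := \rank E in
    [/\
        (forall a b : 'I_3, (a < k)%N -> (b < k)%N ->
            row a E *m (row b E)^T = (a == b)%:R%:M),
        (E == relmx r i)%MS &
        (forall a : 'I_3, (k <= a)%N -> row a E = 0)].

Definition z1 (K L : nat) (i1 : 'I_N)
  (g : 'M[R]_(N, d + 1) -> 'M[R]_(N, 3) -> 'M[R]_3)
  (phi : 'rV[R]_(3 + (d + 1)) -> 'rV[R]_K) (rho : 'rV[R]_K -> 'rV[R]_L)
  (s : 'M[R]_(N, d)) (r : 'M[R]_(N, 3)) : 'rV[R]_L :=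
  let E1 := gapp g (LE s r i1) in
  rho (\sum_(j < N) phi (row_mx (row j (relmx r i1) *m E1^T) (row j (stilde s)))).

End Defs.

(* Main.v *)
Require Import Defs.
From HB Require Import structures.
From mathcomp Require Import all_boot all_order all_algebra all_fingroup.
From mathcomp Require Import reals ring lra.
Import Order.TTheory GRing.Theory Num.Theory.
Local Open Scope ring_scope.

Section Geo.
Variable R : realType.
Implicit Types u v w : 'rV[R]_3.

Definition dot u v : R := \sum_k u 0 k * v 0 k.
Definition i0 : 'I_3 := @Ordinal 3 0 isT.
Definition i1 : 'I_3 := @Ordinal 3 1 isT.
Definition i2 : 'I_3 := @Ordinal 3 2 isT.

Lemma dotE u v : dot u v = u 0 i0 * v 0 i0 + u 0 i1 * v 0 i1 + u 0 i2 * v 0 i2.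
Proof.
rewrite /dot !big_ord_recr big_ord0 /= add0r.
have -> : widen_ord (leqnSn 2) (widen_ord (leqnSn 1) (@ord_max 0)) = i0 by apply: val_inj.
have -> : widen_ord (leqnSn 2) (@ord_max 1) = i1 by apply: val_inj.
by have -> : (@ord_max 2) = i2 by apply: val_inj.
Qed.

Definition vec3 (a b c : R) : 'rV[R]_3 := \row_i [:: a; b; c]`_i.
Lemma vec3E0 a b c : (vec3 a b c) 0 i0 = a. Proof. by rewrite /vec3 !mxE. Qed.
Lemma vec3E1 a b c : (vec3 a b c) 0 i1 = b. Proof. by rewrite /vec3 !mxE. Qed.
Lemma vec3E2 a b c : (vec3 a b c) 0 i2 = c. Proof. by rewrite /vec3 !mxE. Qed.

Definition cross u v := vec3 (u 0 i1 * v 0 i2 - u 0 i2 * v 0 i1)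
  (u 0 i2 * v 0 i0 - u 0 i0 * v 0 i2) (u 0 i0 * v 0 i1 - u 0 i1 * v 0 i0).

Definition mk3 u v w : 'M[R]_3 := \matrix_(i, j) ([:: u; v; w]`_i) 0 j.

Lemma row_mk3 u v w (a : 'I_3) : row a (mk3 u v w) = [:: u; v; w]`_a.
Proof. by apply/rowP => j; rewrite !mxE. Qed.

Lemma orth3P (o : 'M[R]_3) :
  (forall a b : 'I_3, dot (row a o) (row b o) = (a == b)%:R) -> orth3 o.
Proof.
move=> H; apply/matrixP => a b; rewrite mxE [RHS]mxE -H /dot.
by apply: eq_bigr => k _; rewrite !mxE.
Qed.

Lemma dotC u v : dot u v = dot v u.
Proof. by rewrite !dotE; ring. Qed.

Lemma orth_mk3 u v : dot u u = 1 -> dot v v = 1 -> dot u v = 0 ->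
  orth3 (mk3 u v (cross u v)).
Proof.
move=> Hu Hv Huv; apply: orth3P => a b; rewrite !row_mk3.
have Hc1 : dot u (cross u v) = 0.
  by rewrite dotE /cross; rewrite !(vec3E0, vec3E1, vec3E2); ring.
have Hc2 : dot v (cross u v) = 0.
  by rewrite dotE /cross; rewrite !(vec3E0, vec3E1, vec3E2); ring.
have Hc3 : dot (cross u v) (cross u v) = 1.
  have Lag : dot (cross u v) (cross u v) = dot u u * dot v v - dot u v ^+ 2.
    by rewrite !dotE /cross !(vec3E0, vec3E1, vec3E2); ring.
  by rewrite Lag Hu Hv Huv expr0n /= mul1r subr0.
case: a => [[|[|[|a]]] Ha]; case: b => [[|[|[|b]]] Hb] //=;
  rewrite ?Hu ?Hv ?Huv ?Hc1 ?Hc2 ?Hc3 // dotC ?Huv ?Hc1 ?Hc2 //.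
Qed.

Lemma dot_mul u v : dot u v = (u *m v^T) 0 0.
Proof. by rewrite !mxE /dot; apply: eq_bigr => k _; rewrite !mxE. Qed.

Lemma dotZl c u v : dot (c *: u) v = c * dot u v.
Proof. by rewrite !dotE !mxE; ring. Qed.
Lemma dotZr c u v : dot u (c *: v) = c * dot u v.
Proof. by rewrite !dotE !mxE; ring. Qed.

Lemma unit_perp u : dot u u = 1 -> exists w, dot w w = 1 /\ dot u w = 0.
Proof.
move=> Hu.
pose x := u 0 i0; pose y := u 0 i1; pose z := u 0 i2.
have Hu' : x * x + y * y + z * z = 1 by rewrite -Hu dotE.
have [w0 [Hn Hp]] : exists w0, dot w0 w0 != 0 /\ dot u w0 = 0.
  have [Hyz|Hyz] := eqVneq (y * y + z * z) 0.
    exists (vec3 z 0 (- x)); rewrite !dotE !(vec3E0, vec3E1, vec3E2); split; last first.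
      by rewrite -/x -/y -/z; ring.
    apply/eqP => H0; nra.
  exists (vec3 0 (- z) y); rewrite !dotE !(vec3E0, vec3E1, vec3E2); split; last first.
    by rewrite -/x -/y -/z; ring.
  by apply: contra Hyz => /eqP H0; apply/eqP; rewrite -/y -/z in H0; nra.
have Hge : 0 <= dot w0 w0 by rewrite dotE; nra.
have Hpos : 0 < dot w0 w0 by rewrite lt_neqAle eq_sym Hn.
exists ((Num.sqrt (dot w0 w0))^-1 *: w0); split.
  rewrite dotZl dotZr mulrA -expr2 exprVn sqr_sqrtr //.
  by rewrite mulVf.
by rewrite dotZr Hp mulr0.
Qed.

Lemma complete (E : 'M[R]_3) (k : nat) : (k <= 3)%N ->
  (forall a b : 'I_3, (a < k)%N -> (b < k)%N ->
     row a E *m (row b E)^T = (a == b)%:R%:M) ->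
  exists o, orth3 o /\ forall a : 'I_3, (a < k)%N -> row a o = row a E.
Proof.
move=> Hk H.
have HD : forall a b : 'I_3, (a < k)%N -> (b < k)%N ->
    dot (row a E) (row b E) = (a == b)%:R.
  by move=> a b Ha Hb; rewrite dot_mul H // mxE eqxx mulr1n.
case: k Hk H HD => [|[|[|[|k]]]] // _ _ HD.
- exists 1%:M; split; last by case.
  by rewrite /orth3 trmx1 mul1mx.
- have H00 : dot (row i0 E) (row i0 E) = 1 by rewrite HD.
  have [w [Hw Hpw]] := unit_perp _ H00.
  exists (mk3 (row i0 E) w (cross (row i0 E) w)); split.
    by apply: orth_mk3.
  case=> [[|a] Ha] // _; rewrite row_mk3 /=.
  by congr row; apply: val_inj.
- exists (mk3 (row i0 E) (row i1 E) (cross (row i0 E) (row i1 E))); split.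
    by apply: orth_mk3; rewrite HD.
  case=> [[|[|a]] Ha] // _; rewrite row_mk3 /=; by congr row; apply: val_inj.
- exists E; split => //; apply: orth3P => a b; apply: HD; exact: ltn_ord.
Qed.
End Geo.
Arguments dot {R}.

Section Main.
Variable R : realType.

Lemma mulT_entry m n (A : 'M[R]_(m, 3)) (B : 'M[R]_(n, 3)) a b :
  (A *m B^T) a b = dot (row a A) (row b B).
Proof. by rewrite !mxE /dot; apply: eq_bigr => k _; rewrite !mxE. Qed.

Lemma frame_orth (E : 'M[R]_3) (k : nat) : (k <= 3)%N ->
  (forall a b : 'I_3, (a < k)%N -> (b < k)%N ->
     row a E *m (row b E)^T = (a == b)%:R%:M) ->
  (forall a : 'I_3, (k <= a)%N -> row a E = 0) ->
  exists o, orth3 o /\ E *m o^T = E *m E^T.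
Proof.
move=> Hk H1 H3; have [o [Ho Hr]] := @complete R E k Hk H1.
exists o; split => //; apply/matrixP => a b; rewrite !mulT_entry.
have Hod : forall a b : 'I_3, dot (row a o) (row b o) = (a == b)%:R.
  by move=> a' b'; rewrite -mulT_entry Ho mxE.
have [Ha|Ha] := ltnP a k; last first.
  by rewrite H3 // /dot !big1 // => i _; rewrite mxE mul0r.
rewrite -Hr // Hod.
have [Hb|Hb] := ltnP b k.
  by rewrite -Hr // Hod.
rewrite H3 // /dot big1; last by move=> i _; rewrite !mxE mulr0.
case: eqP => // Hab; subst; by rewrite ltnNge Hb in Ha.
Qed.
End Main.

Theorem proposition8 (R : realType) (N d m : nat)
  (hN : (1 < N)%N) (hd : (1 <= d)%N) (hm : (1 <= m)%N)
  (f : 'M[R]_(N, d) -> 'M[R]_(N, 3) -> 'rV[R]_m)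
  (f_O3 : forall s r (o : 'M[R]_3), orth3 o -> f s (r *m o^T) = f s r)
  (f_transl : forall s r (t : 'rV[R]_3), f s (r + transl N t) = f s r)
  (f_perm : forall s r (p : 'S_N), f (perm_rows p s) (perm_rows p r) = f s r)
  (g : 'M[R]_(N, d + 1) -> 'M[R]_(N, 3) -> 'M[R]_3)
  (g_eq : g_equivariant g) (g_fr : g_frame g) :
  let i1 : 'I_N := @Ordinal N 0 (ltnW hN) in
  exists (K L : nat) (phi : 'rV[R]_(3 + (d + 1)) -> 'rV[R]_K)
         (rho : 'rV[R]_K -> 'rV[R]_L) (h : 'rV[R]_L -> 'rV[R]_m),
    let F := fun (s : 'M[R]_(N, d)) (r : 'M[R]_(N, 3)) =>
      (N`!%:R)^-1 *: \sum_(p : 'S_N)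
         h (z1 i1 g phi rho (perm_rows p s) (perm_rows p r)) in
    (forall s r (p : 'S_N), F (perm_rows p s) (perm_rows p r) = F s r) /\
    (forall s r, F s r = f s r).
Proof.
move=> i1.
pose lastc : 'I_(3 + (d + 1)) := rshift 3 (rshift d (ord0 : 'I_1)).
pose phi (x : 'rV[R]_(3 + (d + 1))) : 'rV[R]_(N * (3 + (d + 1))) :=
  mxvec (\matrix_(j < N, c < 3 + (d + 1))
           (if x 0 lastc == (j.+1)%:R then x 0 c else 0)).
pose h (z : 'rV[R]_(N * (3 + (d + 1)))) : 'rV[R]_m :=
  f (lsubmx (rsubmx (vec_mx z : 'M_(N, 3 + (d + 1)))))
    (lsubmx (vec_mx z : 'M_(N, 3 + (d + 1)))).
exists (N * (3 + (d + 1)))%N, (N * (3 + (d + 1)))%N, phi, id, h => F.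
have Hterm : forall S r, h (z1 i1 g phi id S r) = f S r.
  move=> S r; rewrite /z1 /=.
  set E := gapp g (LE S r i1).
  have -> : \sum_(j < N) phi (row_mx (row j (relmx r i1) *m E^T) (row j (stilde S)))
      = mxvec (row_mx (relmx r i1 *m E^T) (stilde S)).
    rewrite -raddf_sum /=; congr mxvec; apply/matrixP => j c.
    rewrite summxE (bigD1 j) //= big1 ?addr0.
      rewrite mxE /lastc row_mxEr mxE /stilde row_mxEr mxE eqxx -row_mul -row_row_mx mxE.
      by [].
    move=> jj Hj; rewrite mxE row_mxEr mxE /stilde row_mxEr mxE eqr_nat eqSS.
    by rewrite (inj_eq val_inj) (negPf Hj).
  rewrite /h mxvecK row_mxKl row_mxKr /stilde row_mxKl.
  move: (g_fr S r i1) => /= [H1 H2 H3].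
  have [o [Ho HoE]] := @frame_orth R E _ (rank_leq_row E) H1 H3.
  case/andP: H2 => _ /submxP [D HD].
  rewrite HD -mulmxA -HoE mulmxA -HD f_O3 //.
  have -> : relmx r i1 = r *m (- 1%:M)^T + transl N (row i1 r).
    have -> : r *m (- 1%:M)^T = - r.
      by rewrite linearN /= trmx1 mulmxN mulmx1.
    apply/matrixP => j c; rewrite !mxE big_ord1 !mxE.
    by rewrite mul1r addrC.
  rewrite (f_transl S (r *m (-1%:M)^T) (row i1 r)) f_O3 //.
  by rewrite /orth3 linearN /= trmx1 mulmxN mulNmx mul1mx opprK.
have HF : forall s r, F s r = f s r.
  move=> s r; rewrite /F (eq_bigr (fun _ => f s r)); last first.
    by move=> p _; rewrite Hterm; exact: (f_perm s r p).
  have -> : \sum_(p : 'S_N) f s r = f s r *+ N`! by rewrite sumr_const card_Sn.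
  rewrite -scaler_nat scalerA mulVf ?scale1r //.
  by rewrite pnatr_eq0 -lt0n fact_gt0.
by split => s r; [move=> p; rewrite (HF (perm_rows p s) (perm_rows p r)) (HF s r); exact: (f_perm s r p) | exact: HF].
Qed.
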